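(* Let $n\ge k\ge d$ be positive integers and $\boldsymbol{\alpha}_k=(\alpha_1,\dots,\alpha_k)$ a list of $k$ distinct rational numbers. Let $\mathcal{Z}_{n,k,d}(\boldsymbol{\alpha}_k)\subseteq\mathbb{Q}^{n+d}$ be the set of points $(z_1,\dots,z_n;z_{n+1},\dots,z_{n+d})$ such that every coordinate lies in $\{\alpha_1,\dots,\alpha_k\}$, the coordinates $z_{n+1},\dots,z_{n+d}$ are distinct, and $\{z_1,\dots,z_n\}=\{z_{n+1},\dots,z_{n+d}\}$. Then the vanishing ideal $\mathbf{I}(\mathcal{Z}_{n,k,d}(\boldsymbol{\alpha}_k))\subseteq\mathbb{Q}[x_1,\dots,x_n,y_1,\dots,y_d]$ is generated by \begin{itemize} \item $e_r(\boldsymbol{\alpha}_k) - e_{r-1}(\boldsymbol{\alpha}_k)h_1(\mathbf{y}_d) + \cdots + (-1)^r h_r(\mathbf{y}_d)$ for all $r>k-d$, \item $e_r(\mathbf{x}_n) - e_{r-1}(\mathbf{x}_n)h_1(\mathbf{y}_d)+\cdots+(-1)^r h_r(\mathbf{y}_d)$ for all $r>n-d$, \item $x_i^d - x_i^{d-1}e_1(\mathbf{y}_d)+\cdots+(-1)^d e_d(\mathbf{y}_d)$ for $i=1,\dots,n$. \end{itemize}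
   Context: The coordinate ring of $\mathbb{Q}^{n+d}$ is identified with $\mathbb{Q}[\mathbf{x}_n,\mathbf{y}_d]$, $\mathbf{x}_n=(x_1,\dots,x_n)$, $\mathbf{y}_d=(y_1,\dots,y_d)$. For a set $\mathcal{Z}$, $\mathbf{I}(\mathcal{Z})$ is the ideal of polynomials vanishing on $\mathcal{Z}$. $e_r,h_r$ are elementary and complete homogeneous symmetric polynomials (with $e_0=h_0=1$, $e_r=0$ when $r$ exceeds the number of variables). *)

(* Defs.v *)
From HB Require Import structures.
From mathcomp Require Import all_boot all_order all_algebra.
From mathcomp Require Export mpoly.
Set Implicit Arguments. Unset Strict Implicit. Unset Printing Implicit Defensive.
Import Order.TTheory GRing.Theory Num.Theory.
Local Open Scope ring_scope.

Definition esymf (R : comRingType) (m : nat) (F : 'I_m -> R) (r : nat) : R :=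
  \sum_(S : {set 'I_m} | #|S| == r) \prod_(i in S) F i.

Definition hsymf (R : comRingType) (m : nat) (F : 'I_m -> R) (r : nat) : R :=
  \sum_(f : {ffun 'I_m -> 'I_r.+1} | (\sum_i (f i : nat) == r)%N)
     \prod_i F i ^+ f i.

Definition in_ideal_gen (R : comRingType) (G : R -> Prop) (p : R) : Prop :=
  exists s : seq (R * R),
    (forall q, q \in s -> G q.2) /\ p = \sum_(q <- s) q.1 * q.2.

Section Gens.
Variables (n d : nat).
Definition PR := {mpoly rat[n + d]}.
Definition xv (i : 'I_n) : PR := 'X_(lshift d i).
Definition yv (j : 'I_d) : PR := 'X_(rshift n j).

Definition altsum (E : nat -> PR) (r : nat) : PR :=
  \sum_(j < r.+1) (-1) ^+ j * E (r - j)%N * hsymf yv j.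

Definition gen1 (k : nat) (alpha : 'I_k -> rat) (r : nat) : PR :=
  altsum (fun s => (esymf alpha s)%:MP) r.
Definition gen2 (r : nat) : PR := altsum (esymf xv) r.
Definition gen3 (i : 'I_n) : PR :=
  \sum_(j < d.+1) (-1) ^+ j * xv i ^+ (d - j) * esymf yv j.

Definition gens (k : nat) (alpha : 'I_k -> rat) (p : PR) : Prop :=
  (exists r, (k - d < r)%N /\ p = gen1 alpha r) \/
  (exists r, (n - d < r)%N /\ p = gen2 r) \/
  (exists i, p = gen3 i).

Definition inZ (k : nat) (alpha : 'I_k -> rat) (z : 'I_(n + d) -> rat) : Prop :=
  (forall t, exists a, z t = alpha a) /\
  injective (fun j : 'I_d => z (rshift n j)) /\
  (forall i : 'I_n, exists j : 'I_d, z (lshift d i) = z (rshift n j)) /\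
  (forall j : 'I_d, exists i : 'I_n, z (rshift n j) = z (lshift d i)).
End Gens.

(* Main.v *)
Require Import Defs.
From mathcomp Require Import all_boot all_order all_algebra.
From mathcomp Require Import mpoly.
From mathcomp Require Import ring zify.
Set Implicit Arguments. Unset Strict Implicit. Unset Printing Implicit Defensive.
Import Order.TTheory GRing.Theory Num.Theory.
Local Open Scope ring_scope.

Section PS.
Variable R : comNzRingType.

Definition lin (c : R) : {poly R} := 1 + c *: 'X.
Definition TT (M : nat) (c : R) : {poly R} := \sum_(m < M.+1) c ^+ m *: 'X^m.
Definition eqM (M : nat) (p q : {poly R}) := forall i, (i <= M)%N -> p`_i = q`_i.

Lemma coef_lin c i : (lin c)`_i = if i == 0%N then 1 else if i == 1%N then c else 0.
Proof.
rewrite /lin coefD coef1 coefZ coefX.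
by case: i => [|[|i]] /=; rewrite ?mulr0 ?mulr1 ?addr0 ?add0r.
Qed.

Lemma coef_TT M c i : (TT M c)`_i = if (i <= M)%N then c ^+ i else 0.
Proof.
rewrite /TT coef_sum.
under eq_bigr => m _ do rewrite coefZ coefXn.
case: leqP => hi.
  rewrite (bigD1 (Ordinal (hi : (i < M.+1)%N))) //= eqxx mulr1 big1 ?addr0 //.
  by move=> j /eqP hj; rewrite eq_sym; case: eqP => // e; [case: hj; apply: val_inj | rewrite mulr0].
rewrite big1 // => j _; case: eqP => [e|]; last by rewrite mulr0.
by move: (ltn_ord j); rewrite -e ltnS leqNgt hi.
Qed.

Lemma eqM_refl M p : eqM M p p. Proof. by []. Qed.
Lemma eqM_sym M p q : eqM M p q -> eqM M q p. Proof. by move=> h i hi; rewrite h. Qed.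
Lemma eqM_trans M p q r : eqM M p q -> eqM M q r -> eqM M p r.
Proof. by move=> h1 h2 i hi; rewrite h1 ?h2. Qed.

Lemma eqM_mul M p p' q q' : eqM M p p' -> eqM M q q' -> eqM M (p * q) (p' * q').
Proof.
move=> h1 h2 i hi; rewrite !coefM; apply: eq_bigr => j _.
rewrite h1 ?h2 //; last exact: leq_trans (leq_ord j) hi.
exact: leq_trans (leq_subr _ _) hi.
Qed.

Lemma eqM_le M M' p q : (M' <= M)%N -> eqM M p q -> eqM M' p q.
Proof. by move=> hM h i hi; apply: h; apply: leq_trans hi hM. Qed.

Lemma eqM_linT M c : eqM M (lin c * TT M (- c)) 1.
Proof.
move=> i hi; rewrite coefM coef1 big_ord_recl coef_lin /= subn0 coef_TT hi mul1r.
case: i hi => [|i] hi /=; first by rewrite big_ord0 addr0 expr0.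
rewrite big_ord_recl /= coef_lin /= subSS subn0 coef_TT (ltnW hi) big1 ?addr0.
  by rewrite exprS /= mulNr addNr.
by move=> j _; rewrite coef_lin /= mul0r.
Qed.

Lemma lin_TT_eqM M c p : eqM M (p * (lin c * TT M (- c))) p.
Proof. by move=> i hi; rewrite (eqM_mul (@eqM_refl M p) (@eqM_linT M c)) ?mulr1. Qed.

End PS.

Section PS2.
Variable R : comNzRingType.

Section Tail.
Variable P : R -> Prop.
Hypothesis P0 : P 0.
Hypothesis PD : forall x y, P x -> P y -> P (x + y).
Hypothesis PM : forall x y, P y -> P (x * y).

Definition tailJ a M (p : {poly R}) := forall r, (a < r)%N -> (r <= M)%N -> P p`_r.

Lemma tail_mul a b M p q : tailJ a M p -> tailJ b M q -> tailJ (a + b) M (p * q).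
Proof.
move=> hp hq r h1 h2; rewrite coefM.
apply: (big_ind P) => //= j _.
case: (ltnP a j) => hj.
  rewrite mulrC; apply: PM; apply: hp => //; apply: leq_trans h2.
  exact: leq_ord.
apply: PM; apply: hq; last exact: leq_trans (leq_subr _ _) h2.
have := ltn_ord j; lia.
Qed.

Lemma tail_size a M (p : {poly R}) : (size p <= a.+1)%N -> tailJ a M p.
Proof. by move=> hs r h1 _; rewrite nth_default //; apply: leq_trans hs h1. Qed.

Lemma tail_eqM a M p q : eqM M p q -> tailJ a M p -> tailJ a M q.
Proof. by move=> he hp r h1 h2; rewrite -he //; apply: hp. Qed.

Lemma tail_le a a' M M' p : (a <= a')%N -> (M' <= M)%N -> tailJ a M p -> tailJ a' M' p.
Proof.
move=> ha hM hp r h1 h2; apply: hp; first exact: leq_ltn_trans h1.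
exact: leq_trans hM.
Qed.
End Tail.

Lemma eqM_prod (I : Type) (r : seq I) M (F G : I -> {poly R}) :
  (forall i, eqM M (F i) (G i)) -> eqM M (\prod_(i <- r) F i) (\prod_(i <- r) G i).
Proof.
move=> h; apply: (big_ind2 (eqM M)).
- exact: eqM_refl.
- by move=> x1 x2 y1 y2 e1 e2; apply: eqM_mul.
- by move=> i _; apply: h.
Qed.

Lemma coef_prod_lin m (F : 'I_m -> R) s :
  (\prod_i lin (F i))`_s = esymf F s.
Proof.
rewrite /lin; under eq_bigr do rewrite addrC.
rewrite bigA_distr coef_sum /esymf [in RHS]big_mkcond /=; apply: eq_bigr => J _.
rewrite -big_mkcond /= scaler_prod prodr_const coefZ coefXn eq_sym.
by case: eqP; rewrite ?mulr1 ?mulr0.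
Qed.

Lemma coef_prod_TTr m (F : 'I_m -> R) r :
  (\prod_j TT r (F j))`_r = hsymf F r.
Proof.
rewrite /TT bigA_distr_bigA coef_sum /hsymf [in RHS]big_mkcond /=; apply: eq_bigr => f _.
rewrite scaler_prod prodrXr coefZ coefXn eq_sym.
by case: eqP; rewrite ?mulr1 ?mulr0.
Qed.

Lemma eqM_TT M M' (c : R) : (M' <= M)%N -> eqM M' (TT M c) (TT M' c).
Proof.
move=> hM i hi; rewrite !coef_TT hi; by rewrite (leq_trans hi hM).
Qed.

Lemma coef_prod_TT M m (F : 'I_m -> R) r : (r <= M)%N ->
  (\prod_j TT M (F j))`_r = hsymf F r.
Proof.
move=> hr; rewrite -coef_prod_TTr; apply: (@eqM_prod _ _ r) => //.
by move=> j; apply: eqM_TT.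
Qed.

Lemma hsymf_opp m (F : 'I_m -> R) r :
  hsymf (fun j => - F j) r = (-1) ^+ r * hsymf F r.
Proof.
rewrite /hsymf mulr_sumr; apply: eq_bigr => f /eqP hf.
under eq_bigr do rewrite exprNn.
by rewrite big_split /= prodrXr hf.
Qed.

Lemma coef_mul_lin b (Q : {poly R}) m :
  (lin b * Q)`_m.+1 = Q`_m.+1 + b * Q`_m.
Proof.
rewrite coefM big_ord_recl big_ord_recl /= !coef_lin /= subn0 subSS subn0 mul1r.
by rewrite big1 ?addr0 // => j _; rewrite coef_lin /= mul0r.
Qed.

Lemma coef_mul_lin0 b (Q : {poly R}) : (lin b * Q)`_0 = Q`_0.
Proof. by rewrite coefM big_ord_recl big_ord0 coef_lin /= mul1r addr0. Qed.

Lemma coef_prod_lin_big (I : Type) (s : seq I) (F : I -> R) m :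
  (size s < m)%N -> (\prod_(b <- s) lin (F b))`_m = 0.
Proof.
elim: s m => [|b s IH] m hm; first by rewrite big_nil coef1; case: m hm.
case: m hm => // m hm; rewrite big_cons coef_mul_lin !IH ?mulr0 ?addr0 //.
exact: ltnW.
Qed.

Lemma rev_lemma (I : Type) (s : seq I) (F : I -> R) M c m :
  (size s <= m)%N -> (m <= M)%N ->
  ((\prod_(b <- s) lin (F b)) * TT M c)`_m = c ^+ (m - size s) * \prod_(b <- s) (F b + c).
Proof.
elim: s m => [|b s IH] m h1 h2.
  by rewrite !big_nil mul1r mulr1 coef_TT h2 subn0.
case: m h1 h2 => // m h1 h2.
have hs : (size s <= m)%N by [].
rewrite big_cons -mulrA coef_mul_lin !IH //; try lia.
rewrite big_cons /= subSS.
have -> : (m.+1 - size s = (m - size s).+1)%N by rewrite subSn.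
rewrite exprS; ring.
Qed.

End PS2.

Section Ideal.
Variable R : comNzRingType.
Variable G : R -> Prop.
Local Notation J := (in_ideal_gen G).

Lemma J0 : J 0.
Proof. by exists [::]; split => //; rewrite big_nil. Qed.

Lemma JD p q : J p -> J q -> J (p + q).
Proof.
move=> [s1 [h1 ->]] [s2 [h2 ->]]; exists (s1 ++ s2); split; last by rewrite big_cat.
by move=> x; rewrite mem_cat => /orP[/h1|/h2].
Qed.

Lemma JM x q : J q -> J (x * q).
Proof.
move=> [s [h ->]]; exists [seq (x * t.1, t.2) | t <- s]; split.
  by move=> t /mapP[u hu ->] /=; apply: h.
by rewrite big_map mulr_sumr; apply: eq_bigr => t _ /=; rewrite mulrA.
Qed.

Lemma JMr x q : J q -> J (q * x).
Proof. by move=> h; rewrite mulrC; apply: JM. Qed.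

Lemma Jgen g : G g -> J g.
Proof.
move=> hg; exists [:: (1, g)]; split; last by rewrite big_cons big_nil mul1r addr0.
by move=> t; rewrite inE => /eqP -> /=.
Qed.

Lemma JN p : J p -> J (- p).
Proof. by move=> h; rewrite -mulN1r; apply: JM. Qed.

Lemma JB p q : J p -> J q -> J (p - q).
Proof. by move=> h1 h2; apply: JD => //; apply: JN. Qed.

Lemma Jsum (I : Type) (r : seq I) (P : pred I) (F : I -> R) :
  (forall i, P i -> J (F i)) -> J (\sum_(i <- r | P i) F i).
Proof. by move=> h; apply: (big_ind J) => //; [apply: J0 | apply: JD]. Qed.

Lemma Jcong_prod (I : Type) (r : seq I) (A B : I -> R) :
  (forall i, J (A i - B i)) -> J (\prod_(i <- r) A i - \prod_(i <- r) B i).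
Proof.
move=> h; apply: (big_ind2 (fun a b => J (a - b))).
- by rewrite subrr; apply: J0.
- move=> a1 b1 a2 b2 e1 e2.
  have -> : a1 * a2 - b1 * b2 = a1 * (a2 - b2) + (a1 - b1) * b2 by ring.
  by apply: JD; [apply: JM | apply: JMr].
- by move=> i _; apply: h.
Qed.

End Ideal.

Section LemmaL.
Variables (N k : nat) (al : 'I_k -> rat).
Hypothesis al_inj : injective al.
Variable G : {mpoly rat[N]} -> Prop.
Local Notation J := (in_ideal_gen G).
Local Notation PRN := {mpoly rat[N]}.

Definition Uu (t : 'I_N) (f : {poly rat}) : PRN := horner_alg ('X_t : PRN) f.

Lemma Uu_eval t f z : (Uu t f).@[z] = f.[z t].
Proof.
elim/poly_ind: f => [|p c IH]; first by rewrite /Uu rmorph0 meval0 horner0.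
rewrite /Uu rmorphD rmorphM /= horner_algX horner_algC alg_mpolyC.
by rewrite mevalD mevalM mevalXU mevalC -/(Uu t p) IH hornerMXaddC.
Qed.

Hypothesis grid : forall t, J (\prod_a ('X_t - (al a)%:MP)).

Lemma UJ t f : (forall a, f.[al a] = 0) -> J (Uu t f).
Proof.
move=> hf.
have hall : all (root f) [seq al a | a <- index_enum 'I_k].
  by apply/allP => x /mapP[a _ ->]; apply/eqP/hf.
have hu : uniq_roots [seq al a | a <- index_enum 'I_k].
  by rewrite uniq_rootsE map_inj_uniq // index_enum_uniq.
have [q ->] := uniq_roots_prod_XsubC hall hu.
rewrite /Uu rmorphM /=; apply: JM.
rewrite big_map rmorph_prod /=.
suff -> : \prod_(a <- index_enum 'I_k) horner_alg ('X_t : PRN) ('X - (al a)%:P)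
   = \prod_a ('X_t - (al a)%:MP) by apply: grid.
by apply: eq_bigr => a _; rewrite rmorphB /= horner_algX horner_algC alg_mpolyC.
Qed.

Definition ell (a : 'I_k) : {poly rat} :=
  \prod_(b | b != a) (('X - (al b)%:P) * ((al a - al b)^-1)%:P).

Lemma ell_eval a c : (ell a).[al c] = (a == c)%:R.
Proof.
rewrite /ell horner_prod; case: eqP => [<-|/eqP hac].
  apply: big1 => b hb; rewrite hornerM hornerXsubC hornerC mulfV //.
  by rewrite subr_eq0; apply/eqP => /al_inj e; move: hb; rewrite e eqxx.
rewrite (bigD1 c) 1?eq_sym //= hornerM hornerXsubC hornerC subrr !mul0r //.
Qed.

Definition delta (w : {ffun 'I_N -> 'I_k}) : PRN := \prod_t Uu t (ell (w t)).

Definition alw (w : {ffun 'I_N -> 'I_k}) : 'I_N -> rat := fun t => al (w t).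

Lemma delta_eval w v : (delta w).@[alw v] = (w == v)%:R.
Proof.
rewrite /delta rmorph_prod /=.
under eq_bigr do rewrite Uu_eval ell_eval.
case: eqP => [->|/eqP hwv].
  by apply: big1 => t _; rewrite eqxx.
have [t ht] : exists t, w t != v t.
  apply/existsP; apply: contraR hwv => /existsPn h; apply/eqP/ffunP => t.
  by have := h t; rewrite negbK => /eqP.
by rewrite (bigD1 t) //= (negbTE ht) mul0r.
Qed.

Definition Phi (p : PRN) : PRN := p - \sum_w p.@[alw w] *: delta w.

Lemma Phi_lin c q p : Phi (c *: q + p) = c *: Phi q + Phi p.
Proof.
rewrite /Phi.
under eq_bigr do rewrite mevalD mevalZ scalerDl -scalerA.
rewrite big_split /= -scaler_sumr scalerBr; ring.
Qed.

Lemma Phi_mono m : J (Phi 'X_[m]).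
Proof.
have key : forall t, J ('X_t ^+ m t - \sum_a (al a) ^+ m t *: Uu t (ell a)).
  move=> t.
  have -> : 'X_t ^+ m t - \sum_a (al a) ^+ m t *: Uu t (ell a)
          = Uu t ('X ^+ m t - \sum_a (al a) ^+ m t *: ell a).
    rewrite /Uu rmorphB rmorphXn /= horner_algX; congr (_ - _).
    rewrite linear_sum; apply: eq_bigr => a _. 
    by rewrite -mul_polyC rmorphM /= horner_algC alg_mpolyC mul_mpolyC.
  apply: UJ => c; rewrite hornerD hornerN hornerXn horner_sum.
  rewrite (bigD1 c) //= hornerZ ell_eval eqxx mulr1 big1 ?addr0 ?subrr //.
  by move=> b hb; rewrite hornerZ ell_eval (negbTE hb) mulr0.
have := Jcong_prod (index_enum 'I_N) key.
rewrite /Phi mpolyXE_id bigA_distr_bigA /=.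
congr (J (_ - _)); apply: eq_bigr => w _.
rewrite scaler_prod /delta; congr (_ *: _).
by rewrite rmorph_prod /=; apply: eq_bigr => t _; rewrite rmorphXn /= mevalXU.
Qed.

Lemma Phi_J p : J (Phi p).
Proof.
elim/mpolyind: p => [|c m p _ _ IH].
  rewrite /Phi big1 ?subrr; first exact: J0.
  by move=> w _; rewrite meval0 scale0r.
rewrite Phi_lin; apply: JD => //.
have -> : c *: Phi 'X_[m] = c%:MP * Phi 'X_[m] by rewrite mul_mpolyC.
apply: JM; exact: Phi_mono.
Qed.

Variable Zp : ('I_N -> rat) -> Prop.
Hypothesis sep : forall w : {ffun 'I_N -> 'I_k}, ~ Zp (alw w) ->
  exists q, J q /\ q.@[alw w] != 0.

Lemma delta_J w : ~ Zp (alw w) -> J (delta w).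
Proof.
move=> /sep [q [hq hqw]].
have h1 := Phi_J (q * delta w).
have h2 : J (q * delta w) by apply: JMr.
have e : \sum_v (q * delta w).@[alw v] *: delta v = q.@[alw w] *: delta w.
  rewrite (bigD1 w) //= big1 ?addr0.
    by rewrite mevalM delta_eval eqxx mulr1.
  by move=> v hv; rewrite mevalM delta_eval eq_sym (negbTE hv) mulr0 scale0r.
have h3 : J (q.@[alw w] *: delta w).
  have -> : q.@[alw w] *: delta w = q * delta w - Phi (q * delta w).
    by rewrite /Phi e; ring.
  by apply: JB.
have -> : delta w = (q.@[alw w])^-1 *: (q.@[alw w] *: delta w).
  by rewrite scalerA mulVf // scale1r.
rewrite -[_ *: (_ *: delta w)]mul_mpolyC; apply: JM => //.
Qed.

Lemma lemmaL p : (forall z, Zp z -> p.@[z] = 0) -> J p.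
Proof.
move=> hp.
have -> : p = Phi p + \sum_w p.@[alw w] *: delta w by rewrite /Phi subrK.
apply: JD; first exact: Phi_J.
apply: Jsum => w _.
have [e|ne] := eqVneq (p.@[alw w]) 0; first by rewrite e scale0r; apply: J0.
rewrite -[_ *: delta w]mul_mpolyC; apply: JM; apply: delta_J => hz.
by move: ne; rewrite hp ?eqxx.
Qed.

End LemmaL.

Lemma size_ie m : size (index_enum 'I_m) = m.
Proof. by rewrite [index_enum _]unlock -enumT size_enum_ord. Qed.

Lemma prodN_ord (R : comNzRingType) m (F : 'I_m -> R) :
  \prod_(j < m) (- F j) = (-1) ^+ m * \prod_(j < m) F j.
Proof.
under eq_bigr do rewrite -mulN1r.
rewrite big_split /= big_const_ord; congr (_ * _).
by elim: m {F} => [|m IH] //=; rewrite IH exprS.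
Qed.

Section Van.
Variable R : comNzRingType.

Lemma prod_linTT m (y : 'I_m -> R) M :
  eqM M ((\prod_j lin (y j)) * \prod_j TT M (- y j)) 1.
Proof.
rewrite -big_split /=.
apply: (@eqM_trans _ _ _ (\prod_(j < m) 1)); last by rewrite big1_eq.
by apply: eqM_prod => j; apply: eqM_linT.
Qed.

Lemma coef_prod_in_lin (I : finType) (A : {pred I}) (F : I -> R) m :
  (#|A| < m)%N -> (\prod_(a in A) lin (F a))`_m = 0.
Proof. by move=> h; rewrite -big_enum coef_prod_lin_big // -cardE. Qed.

Lemma VAN K d (U : 'I_K -> R) (y : 'I_d -> R) (g : 'I_d -> 'I_K) :
  injective g -> (forall j, U (g j) = y j) ->
  forall r, (K - d < r)%N -> ((\prod_a lin (U a)) * \prod_j TT r (- y j))`_r = 0.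
Proof.
move=> ginj hg r hr.
set S := g @: [set: 'I_d].
rewrite (bigID (mem S)) /=.
have -> : \prod_(i | i \in S) lin (U i) = \prod_j lin (y j).
  rewrite big_imset /=; last by move=> a b _ _; apply: ginj.
  rewrite (eq_bigl xpredT); last by move=> j; rewrite /= in_setT.
  by apply: eq_bigr => j _; rewrite hg.
rewrite [X in X * _]mulrC -mulrA.
have e := eqM_mul (@eqM_refl _ r (\prod_(i | i \notin S) lin (U i))) (@prod_linTT _ y r).
rewrite e // mulr1.
rewrite -(@eq_bigl _ _ _ _ _ (mem (~: S))); last by move=> a; rewrite /= in_setC.
apply: coef_prod_in_lin.
have h1 := cardsC S; rewrite card_imset // cardsT !card_ord in h1.
lia.
Qed.

End Van.

Section Gens2.
Variables (n d k : nat) (alpha : 'I_k -> rat).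
Local Notation PR := {mpoly rat[n + d]}.
Local Notation xv := (@xv n d).
Local Notation yv := (@yv n d).

Definition Aa : {poly PR} := \prod_a lin ((alpha a)%:MP).
Definition Ax : {poly PR} := \prod_i lin (xv i).
Definition Bb M : {poly PR} := \prod_j TT M (- yv j).

Lemma esymfC r : esymf (fun a => (alpha a)%:MP : PR) r = (esymf alpha r)%:MP.
Proof. by rewrite /esymf rmorph_sum; apply: eq_bigr => S _; rewrite rmorph_prod. Qed.

Lemma gen1E r M : (r <= M)%N -> gen1 n d alpha r = (Aa * Bb M)`_r.
Proof.
move=> hr; rewrite coefMr /gen1 /altsum; apply: eq_bigr => j _.
rewrite coef_prod_lin coef_prod_TT; last by apply: leq_trans hr; apply: leq_ord.
by rewrite hsymf_opp esymfC; ring.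
Qed.

Lemma gen2E r M : (r <= M)%N -> gen2 n d r = (Ax * Bb M)`_r.
Proof.
move=> hr; rewrite coefMr /gen2 /altsum; apply: eq_bigr => j _.
rewrite coef_prod_lin coef_prod_TT; last by apply: leq_trans hr; apply: leq_ord.
by rewrite hsymf_opp; ring.
Qed.

Lemma gen3E i : gen3 d i = \prod_j (xv i - yv j).
Proof.
have h := @rev_lemma _ _ (index_enum 'I_d) yv d (- xv i) d.
rewrite size_ie subnn expr0 mul1r in h.
have {}h := h (leqnn d) (leqnn d).
have e : \prod_j (xv i - yv j) = (-1) ^+ d * \prod_j (yv j + - xv i).
  rewrite -prodN_ord; apply: eq_bigr => j _; ring.
rewrite e -h coefM /gen3 mulr_sumr; apply: eq_bigr => j _.
rewrite coef_prod_lin coef_TT leq_subr.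
have hj : (j <= d)%N by rewrite -ltnS.
have -> : ((-1) ^+ d : PR) = (-1) ^+ j * (-1) ^+ (d - j).
  by rewrite -exprD subnKC.
rewrite (exprNn (xv i)).
transitivity ((-1)^+j * ((-1)^+(d-j) * (-1)^+(d-j)) * xv i^+(d-j) * esymf yv j); last ring.
by rewrite -exprMn mulrNN mulr1 expr1n mulr1.
Qed.

End Gens2.

Lemma eqM_prodP (R : comNzRingType) (I : Type) (r : seq I) (P : pred I) M (F G : I -> {poly R}) :
  (forall i, eqM M (F i) (G i)) ->
  eqM M (\prod_(i <- r | P i) F i) (\prod_(i <- r | P i) G i).
Proof.
move=> h; apply: (big_ind2 (eqM M)).
- exact: eqM_refl.
- by move=> x1 x2 y1 y2 e1 e2; apply: eqM_mul.
- by move=> i _; apply: h.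
Qed.

Lemma prod_TTlin (R : comNzRingType) (I : Type) (r : seq I) (P : pred I) M (y : I -> R) :
  eqM M ((\prod_(i <- r | P i) TT M (- y i)) * \prod_(i <- r | P i) lin (y i)) 1.
Proof.
rewrite -big_split /=.
apply: (@eqM_trans _ _ _ (\prod_(i <- r | P i) 1)); last by rewrite big1_eq.
by apply: eqM_prodP => j; rewrite mulrC; apply: eqM_linT.
Qed.

Section Derive.
Variables (n d k : nat) (alpha : 'I_k -> rat).
Hypothesis d_gt0 : (0 < d)%N.
Hypothesis dk : (d <= k)%N.
Hypothesis kn : (k <= n)%N.
Local Notation PR := {mpoly rat[n + d]}.
Local Notation xv := (@xv n d).
Local Notation yv := (@yv n d).
Local Notation J := (in_ideal_gen (@gens n d k alpha)).
Local Notation tJ := (tailJ J).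
Local Notation Aa := (Aa n d alpha).
Local Notation Ax := (Ax n d).
Local Notation Bb := (Bb n d).

Lemma tmul a b M p q : tJ a M p -> tJ b M q -> tJ (a + b) M (p * q).
Proof. apply: tail_mul; [exact: J0 | exact: JD | exact: JM]. Qed.

Lemma tsize a M (p : {poly PR}) : (size p <= a.+1)%N -> tJ a M p.
Proof. apply: tail_size; exact: J0. Qed.

Lemma E1 M : tJ (k - d) M (Aa * Bb M).
Proof.
move=> r h1 h2; rewrite -gen1E //; apply: Jgen; left; by exists r.
Qed.

Lemma E2 M : tJ (n - d) M (Ax * Bb M).
Proof.
move=> r h1 h2; rewrite -gen2E //; apply: Jgen; right; left; by exists r.
Qed.

Lemma Et_tail t M : tJ d.-1 M (\prod_(j | j != t) lin (yv j)).
Proof.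
move=> r h1 h2.
have -> : \prod_(j | j != t) lin (yv j) = \prod_(j in predC1 t) lin (yv j).
  by apply: eq_bigl => j; rewrite inE.
rewrite coef_prod_in_lin; first exact: J0.
by rewrite cardC1 card_ord.
Qed.

Lemma KEY1 (I : Type) (s : seq I) (F : I -> PR) :
  (d <= size s)%N ->
  tJ (size s - d) (size s) ((\prod_(b <- s) lin (F b)) * Bb (size s)) ->
  forall t, J (\prod_(b <- s) (F b - yv t)).
Proof.
move=> hK ht t; set K := size s in hK ht *.
set U := \prod_(b <- s) lin (F b).
have h := tmul ht (@Et_tail t K).
have e : eqM K (U * Bb K * \prod_(j | j != t) lin (yv j)) (U * TT K (- yv t)).
  rewrite /Bb (bigD1 t) //= -!mulrA.
  apply: eqM_mul; first exact: eqM_refl.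
  have := eqM_mul (@eqM_refl _ K (TT K (- yv t))) (@prod_TTlin _ _ (index_enum 'I_d) (fun j => j != t) K yv).
  by rewrite mulr1 mulrA.
have hK2 : (K - d + d.-1 < K)%N by lia.
have := h K hK2 (leqnn K); rewrite e //.
by rewrite rev_lemma // subnn expr0 mul1r.
Qed.

Lemma grid_y t : J (\prod_a ((alpha a)%:MP - yv t)).
Proof.
have := @KEY1 _ (index_enum 'I_k) (fun a => (alpha a)%:MP).
rewrite size_ie => h; apply: h => //; exact: E1.
Qed.

Lemma sep3 j : J (\prod_i (xv i - yv j)).
Proof.
have := @KEY1 _ (index_enum 'I_n) xv.
rewrite size_ie => h; apply: h => //; first exact: leq_trans kn.
exact: E2.
Qed.

Lemma gen3J i : J (gen3 d i).
Proof. by apply: Jgen; right; right; exists i. Qed.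

Lemma D_tail i M : tJ d.-1 M ((\prod_j lin (yv j)) * TT M (- xv i)).
Proof.
move=> m h1 h2.
have hm : (d <= m)%N by lia.
have := @rev_lemma _ _ (index_enum 'I_d) yv M (- xv i) m.
rewrite size_ie => ->  //.
apply: JM.
have -> : \prod_j (yv j + - xv i) = (-1) ^+ d * gen3 d i.
  rewrite gen3E -prodN_ord; apply: eq_bigr => j _; ring.
by apply: JM; apply: gen3J.
Qed.

Lemma grid_x i : J (\prod_a ((alpha a)%:MP - xv i)).
Proof.
have h := tmul (@E1 k) (@D_tail i k).
have e : eqM k (Aa * Bb k * ((\prod_j lin (yv j)) * TT k (- xv i))) (Aa * TT k (- xv i)).
  rewrite -!mulrA; apply: eqM_mul; first exact: eqM_refl.
  rewrite mulrA.
  have := eqM_mul (@prod_TTlin _ _ (index_enum 'I_d) xpredT k yv) (@eqM_refl _ k (TT k (- xv i))).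
  by rewrite mul1r.
have hK : (k - d + d.-1 < k)%N by lia.
have := h k hK (leqnn k); rewrite e //.
by rewrite /Aa rev_lemma ?size_ie // subnn expr0 mul1r.
Qed.

Lemma sep2 j l : j != l ->
  J (((Aa * TT k (- yv j)) * TT k (- yv l))`_k.-1).
Proof.
move=> hjl.
have d2 : (2 <= d)%N.
  have hj := ltn_ord j; have hl := ltn_ord l.
  have : ((j : nat) != l) by [].
  move/eqP => ne; lia.
set S := ~: [set j; l].
have eS : \prod_(m | (m != j) && (m != l)) lin (yv m) = \prod_(m in S) lin (yv m).
  by apply: eq_bigl => m; rewrite !inE negb_or.
have tE : tJ d.-1 k ((\prod_(m | (m != j) && (m != l)) lin (yv m)) * 'X).
  have -> : d.-1 = ((d - 2) + 1)%N by lia.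
  apply: tmul; last by apply: tsize; rewrite size_polyX.
  move=> r h1 h2; rewrite eS coef_prod_in_lin; first exact: J0.
  have := cardsC [set j; l]; rewrite cards2 hjl card_ord -/S; lia.
have h := tmul (@E1 k) tE.
have e : eqM k (Aa * Bb k * ((\prod_(m | (m != j) && (m != l)) lin (yv m)) * 'X))
               (Aa * TT k (- yv j) * TT k (- yv l) * 'X).
  rewrite /Bb (bigD1 j) //= (bigD1 l) //= 1?eq_sym //.
  have -> : Aa * (TT k (- yv j) * (TT k (- yv l) *
        \prod_(i | (i != j) && (i != l)) TT k (- yv i))) *
        ((\prod_(m | (m != j) && (m != l)) lin (yv m)) * 'X)
      = (Aa * TT k (- yv j) * TT k (- yv l) * 'X) *
        ((\prod_(i | (i != j) && (i != l)) TT k (- yv i)) *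
        (\prod_(m | (m != j) && (m != l)) lin (yv m))) by ring.
  have := eqM_mul (@eqM_refl _ k (Aa * TT k (- yv j) * TT k (- yv l) * 'X))
     (@prod_TTlin _ _ (index_enum 'I_d) (fun m => (m != j) && (m != l)) k yv).
  by rewrite mulr1.
have hK : (k - d + d.-1 < k)%N by lia.
have := h k hK (leqnn k); rewrite e // coefMX.
have -> : (k == 0)%N = false by apply/eqP; lia.
done.
Qed.

End Derive.

Section Maps.
Variables (R S : comNzRingType) (f : {rmorphism R -> S}).

Lemma map_lin c : map_poly f (lin c) = lin (f c).
Proof.
by rewrite /lin rmorphD rmorph1 -!mul_polyC rmorphM /= map_polyC map_polyX.
Qed.

Lemma map_TT M c : map_poly f (TT M c) = TT M (f c).
Proof.
rewrite /TT rmorph_sum; apply: eq_bigr => m _.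
rewrite -!mul_polyC rmorphM /= map_polyC map_polyXn.
congr (_%:P * _); exact: rmorphXn.
Qed.
End Maps.

Section Final.
Variables (n d k : nat) (alpha : 'I_k -> rat).
Hypothesis d_gt0 : (0 < d)%N.
Hypothesis dk : (d <= k)%N.
Hypothesis kn : (k <= n)%N.
Hypothesis ainj : injective alpha.
Local Notation PR := {mpoly rat[n + d]}.
Local Notation xv := (@xv n d).
Local Notation yv := (@yv n d).
Local Notation J := (in_ideal_gen (@gens n d k alpha)).

Lemma eval_coef (z : 'I_(n + d) -> rat) (p : {poly PR}) i :
  (p`_i).@[z] = (map_poly (meval z) p)`_i.
Proof. by rewrite coef_map. Qed.

Lemma mapAa z : map_poly (meval z) (Aa n d alpha) = \prod_a lin (alpha a).
Proof.
rewrite /Aa rmorph_prod; apply: eq_bigr => a _ /=; by rewrite map_lin /= mevalC.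
Qed.

Lemma mapAx z : map_poly (meval z) (Ax n d) = \prod_i lin (z (lshift d i)).
Proof.
rewrite /Ax rmorph_prod; apply: eq_bigr => a _ /=; by rewrite map_lin /= mevalXU.
Qed.

Lemma mapBb z M : map_poly (meval z) (Bb n d M) = \prod_j TT M (- z (rshift n j)).
Proof.
rewrite /Bb rmorph_prod; apply: eq_bigr => a _ /=; by rewrite map_TT /= mevalN mevalXU.
Qed.

Lemma mapTTy z M j : map_poly (meval z) (TT M (- yv j)) = TT M (- z (rshift n j)).
Proof. by rewrite map_TT /= mevalN mevalXU. Qed.

Lemma gen3_eval z i : (gen3 d i).@[z] = \prod_j (z (lshift d i) - z (rshift n j)).
Proof.
rewrite gen3E rmorph_prod; apply: eq_bigr => j _ /=; by rewrite mevalB !mevalXU.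
Qed.

Lemma van_gens (z : 'I_(n + d) -> rat) : @inZ n d k alpha z -> forall g : PR, gens alpha g -> g.@[z] = 0.
Proof.
move=> [h1 [h2 [h3 h4]]] g [[r [hr ->]]|[[r [hr ->]]|[i ->]]].
- have [gg hgg] := fin_all_exists (fun j => h1 (rshift n j)).
  rewrite (gen1E _ _ _ (leqnn r)) eval_coef rmorphM /= mapAa mapBb.
  have ginj : injective gg by move=> j l e; apply: h2 => /=; rewrite !hgg e.
  have hg : forall j, alpha (gg j) = z (rshift n j) by move=> j; rewrite hgg.
  exact: (@VAN _ _ _ alpha (fun j => z (rshift n j)) gg ginj hg r hr).
- have [gg hgg] := fin_all_exists h4.
  rewrite (@gen2E n d r r (leqnn r)) eval_coef rmorphM /= mapAx mapBb.
  have ginj : injective gg by move=> j l e; apply: h2 => /=; rewrite !hgg e.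
  have hg : forall j, z (lshift d (gg j)) = z (rshift n j) by move=> j; rewrite hgg.
  exact: (@VAN _ _ _ (fun i => z (lshift d i)) (fun j => z (rshift n j)) gg ginj hg r hr).
- have [j hj] := h3 i.
  by rewrite gen3_eval (bigD1 j) //= hj subrr mul0r.
Qed.

End Final.

Section Final2.
Variables (n d k : nat) (alpha : 'I_k -> rat).
Hypothesis d_gt0 : (0 < d)%N.
Hypothesis dk : (d <= k)%N.
Hypothesis kn : (k <= n)%N.
Hypothesis ainj : injective alpha.
Local Notation PR := {mpoly rat[n + d]}.
Local Notation xv := (@xv n d).
Local Notation yv := (@yv n d).
Local Notation J := (in_ideal_gen (@gens n d k alpha)).

Lemma sep2_eval (z : 'I_(n + d) -> rat) (j l : 'I_d) (a0 : 'I_k) :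
  z (rshift n j) = alpha a0 -> z (rshift n l) = alpha a0 ->
  (((Aa n d alpha * TT k (- yv j)) * TT k (- yv l))`_k.-1).@[z] != 0.
Proof.
move=> hj hl.
rewrite eval_coef !rmorphM /= mapAa !mapTTy hj hl.
set v := alpha a0.
rewrite (bigD1 a0) //=.
set Q := \prod_(a | a != a0) lin (alpha a).
have e : eqM k (lin v * Q * TT k (- v) * TT k (- v)) (Q * TT k (- v)).
  have -> : lin v * Q * TT k (- v) * TT k (- v) = (Q * TT k (- v)) * (lin v * TT k (- v)) by ring.
  by have := eqM_mul (@eqM_refl _ k (Q * TT k (- v))) (@eqM_linT _ k v); rewrite mulr1.
rewrite e ?leq_pred //.
have eQ : Q = \prod_(a <- enum (predC1 a0)) lin (alpha a).
  by rewrite big_enum /=; apply: eq_bigl => a; rewrite inE.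
have sz : size (enum (predC1 a0)) = k.-1 by rewrite -cardE cardC1 card_ord.
rewrite eQ rev_lemma ?sz ?leq_pred // subnn expr0 mul1r big_enum /=.
apply/prodf_neq0 => a ha; rewrite subr_eq0; apply/eqP => /ainj e2.
by move: ha; rewrite inE e2 eqxx.
Qed.

Lemma sepw (w : {ffun 'I_(n + d) -> 'I_k}) : ~ @inZ n d k alpha (alw alpha w) ->
  exists q, J q /\ q.@[alw alpha w] != 0.
Proof.
move=> hnz; set z := alw alpha w.
case: (boolP [exists i : 'I_n, [forall j : 'I_d, z (lshift d i) != z (rshift n j)]])
  => [/existsP [i /forallP hi] | hA].
  exists (gen3 d i); split; first exact: gen3J.
  rewrite gen3_eval; apply/prodf_neq0 => j _; rewrite subr_eq0; exact: hi j.
case: (boolP [exists j : 'I_d, [exists l : 'I_d, (j != l) && (z (rshift n j) == z (rshift n l))]])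
  => [/existsP [j /existsP [l /andP [hjl /eqP e]]] | hB].
  exists (((Aa n d alpha * TT k (- yv j)) * TT k (- yv l))`_k.-1); split.
    exact: (sep2 alpha d_gt0 dk kn hjl).
  by apply: (@sep2_eval z j l (w (rshift n j))) => //; rewrite -e.
case: (boolP [exists j : 'I_d, [forall i : 'I_n, z (rshift n j) != z (lshift d i)]])
  => [/existsP [j /forallP hj] | hC].
  exists (\prod_i (xv i - yv j)); split; first exact: (sep3 alpha d_gt0 dk kn j).
  rewrite rmorph_prod /=; apply/prodf_neq0 => i _.
  by rewrite mevalB !mevalXU subr_eq0 eq_sym; exact: hj i.
exfalso; apply: hnz; split; [|split; [|split]].
- by move=> t; exists (w t).
- move=> j l /= e; case: (eqVneq j l) => // hjl; exfalso.
  move/negP: hB; apply; apply/existsP; exists j; apply/existsP; exists l.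
  by rewrite hjl /=; apply/eqP.
- move=> i; have /existsPn h := hA; have /forallPn [j /negPn /eqP e] := h i.
  by exists j.
- move=> j; have /existsPn h := hC; have /forallPn [i /negPn /eqP e] := h j.
  by exists i.
Qed.

Lemma gridt (t : 'I_(n + d)) : J (\prod_a ('X_t - (alpha a)%:MP)).
Proof.
have [[i ->]|[j ->]] : (exists i, t = lshift d i) \/ (exists j, t = rshift n j).
- case: (splitP t) => [i e | j e]; [left; exists i | right; exists j];
    by apply/val_inj => /=; rewrite e.
- have -> : \prod_a ('X_(lshift d i) - (alpha a)%:MP) =
            (-1) ^+ k * \prod_a ((alpha a)%:MP - xv i) :> PR.
    by rewrite -prodN_ord; apply: eq_bigr => a _; rewrite /Defs.xv; ring.
  apply: JM; exact: (@grid_x n d k alpha d_gt0 dk kn i).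
- have -> : \prod_a ('X_(rshift n j) - (alpha a)%:MP) =
            (-1) ^+ k * \prod_a ((alpha a)%:MP - yv j) :> PR.
    by rewrite -prodN_ord; apply: eq_bigr => a _; rewrite /Defs.yv; ring.
  apply: JM; exact: (@grid_y n d k alpha d_gt0 dk kn j).
Qed.

End Final2.

Unset Implicit Arguments.
Set Strict Implicit.

Theorem lemma3p2 (n k d : nat) (alpha : 'I_k -> rat) :
  (0 < d)%N -> (d <= k)%N -> (k <= n)%N -> injective alpha ->
  forall p : {mpoly rat[n + d]},
    (forall z : 'I_(n + d) -> rat, inZ alpha z -> p.@[z] = 0) <->
    in_ideal_gen (gens alpha) p.
Proof.
move=> d0 dk kn ainj p; split.
- move=> hp.
  exact: (lemmaL ainj (gridt alpha d0 dk kn) (sepw d0 dk kn ainj) hp).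
- move=> [s [hs ->]] z hz.
  rewrite rmorph_sum big_seq big1 // => q hq /=.
  by rewrite mevalM (van_gens hz (hs q hq)) mulr0.
Qed.
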